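(* Let $\Gamma$ be a non-elementary hyperbolic group with finite generating set $S$, and let $(\gamma_n)$ be a sequence of distinct elements of $\Gamma$. There is $h\in\Gamma$ such that the sequence $(l_S([\gamma_n,h]))_n$ is unbounded.
   Context: $[g,h]=ghg^{-1}h^{-1}$; $l_S$ is the translation length on the Cayley graph $C_S(\Gamma)$. Non-elementary: contains a free subgroup of rank 2. *)

(* Defs.v *)
From Stdlib Require Import List Arith.
Import ListNotations.
Set Implicit Arguments.


(* A group: carrier with multiplication, inverse, identity (left axioms suffice). *)
Record Group := {
  carrier :> Type;
  gmul : carrier -> carrier -> carrier;
  ginv : carrier -> carrier;
  gone : carrier;
  gmul_assoc : forall x y z, gmul x (gmul y z) = gmul (gmul x y) z;
  gmul_1l : forall x, gmul gone x = x;
  gmul_Vl : forall x, gmul (ginv x) x = gone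
}.

Arguments gmul {_}.
Arguments ginv {_}.
Arguments gone {_}.

Section Defs.
Context {G : Group}.

Definition word_prod (w : list G) : G := fold_right (@gmul G) (@gone G) w.

Definition comm (g h : G) : G :=
  gmul g (gmul h (gmul (ginv g) (ginv h))).

Definition S_letter (S : list G) (x : G) : Prop := In x S \/ In (ginv x) S.

Definition represents (S : list G) (w : list G) (g : G) : Prop :=
  Forall (S_letter S) w /\ word_prod w = g.

Definition generates (S : list G) : Prop := forall g, exists w, represents S w g.

Definition word_len_is (S : list G) (g : G) (n : nat) : Prop :=
  (exists w, represents S w g /\ length w = n) /\
  (forall w, represents S w g -> n <= length w).

(* d_S(x,y) = |x^-1 y|_S : the (vertex) metric of the Cayley graph C_S(G) *)
Definition dist_is (S : list G) (x y : G) (n : nat) : Prop :=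
  word_len_is S (gmul (ginv x) y) n.

(* Gromov hyperbolicity of the Cayley graph, via the four-point condition
   on its vertex set: d(x,y)+d(z,w) <= max(d(x,z)+d(y,w), d(x,w)+d(y,z)) + 2 delta *)
Definition hyperbolic (S : list G) : Prop :=
  exists delta : nat, forall x y z w dxy dzw dxz dyw dxw dyz,
    dist_is S x y dxy -> dist_is S z w dzw -> dist_is S x z dxz ->
    dist_is S y w dyw -> dist_is S x w dxw -> dist_is S y z dyz ->
    dxy + dzw <= Nat.max (dxz + dyw) (dxw + dyz) + 2 * delta.

(* letters of the free group on {a,b}: (true = a / false = b, true = +1 / false = -1) *)
Definition letter_val (a b : G) (l : bool * bool) : G :=
  let x := if fst l then a else b in if snd l then x else ginv x.

Fixpoint freely_reduced (l : list (bool * bool)) : Prop :=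
  match l with
  | x :: ((y :: _) as t) => ~ (fst x = fst y /\ snd x <> snd y) /\ freely_reduced t
  | _ => True
  end.

Definition free_pair (a b : G) : Prop :=
  forall l, l <> [] -> freely_reduced l -> word_prod (map (letter_val a b) l) <> @gone G.

(* non-elementary: contains a free subgroup of rank 2 *)
Definition non_elementary : Prop := exists a b : G, free_pair a b.

(* l_S(g) <= B : translation length (minimal displacement  min_x d_S(x, g x))
   on the Cayley graph is at most B *)
Definition transl_len_le (S : list G) (g : G) (B : nat) : Prop :=
  exists x n, dist_is S x (gmul g x) n /\ n <= B.

End Defs.
Arguments non_elementary G : clear implicits.

(* Main.v *)
Require Import Defs.
From Stdlib Require Import List Arith Lia ZArith Classical ClassicalEpsilon.
Import ListNotations.

Lemma nat_min (P : nat -> Prop) : (exists n, P n) -> exists n, P n /\ forall m, P m -> n <= m.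
Proof.
  intros [n Hn]. revert Hn. induction n as [n IH] using (well_founded_induction lt_wf).
  intros Hn. destruct (classic (exists m, P m /\ m < n)) as [[m [Hm Hlt]]|Hno].
  - exact (IH m Hlt Hm).
  - exists n. split; auto. intros m Hm. destruct (le_lt_dec n m); auto. exfalso; apply Hno; eauto.
Qed.

Section Grp.
Context {G : Group}.
Local Infix "**" := (@gmul G) (at level 40, left associativity).
Local Notation "1" := (@gone G).
Local Notation inv := (@ginv G).

Lemma mulA x y z : x ** (y ** z) = x ** y ** z. Proof. apply gmul_assoc. Qed.
Lemma mul1l x : 1 ** x = x. Proof. apply gmul_1l. Qed.
Lemma mulVl x : inv x ** x = 1. Proof. apply gmul_Vl. Qed.
Lemma mulVr x : x ** inv x = 1.
Proof.
  rewrite <- (mul1l (x ** inv x)). rewrite <- (mulVl (inv x)) at 1.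
  rewrite <- mulA. rewrite (mulA (inv x) x (inv x)). rewrite mulVl, mul1l. apply mulVl.
Qed.
Lemma mul1r x : x ** 1 = x.
Proof. rewrite <- (mulVl x), mulA, mulVr, mul1l. reflexivity. Qed.
Lemma mulKl x y : inv x ** (x ** y) = y. Proof. rewrite mulA, mulVl, mul1l; auto. Qed.
Lemma mulKr x y : x ** (inv x ** y) = y. Proof. rewrite mulA, mulVr, mul1l; auto. Qed.
Lemma mulIl x y z : x ** y = x ** z -> y = z.
Proof. intros H. rewrite <- (mulKl x y), H, mulKl. auto. Qed.
Lemma inv_uniq x y : x ** y = 1 -> inv x = y.
Proof. intros H. apply (mulIl x). rewrite mulVr; auto. Qed.
Lemma invK x : inv (inv x) = x. Proof. apply inv_uniq. apply mulVl. Qed.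
Lemma invM x y : inv (x ** y) = inv y ** inv x.
Proof. apply inv_uniq. rewrite mulA, <- (mulA x y), mulVr, mul1r, mulVr. auto. Qed.
Lemma inv1 : inv 1 = 1. Proof. apply inv_uniq. apply mul1l. Qed.
Lemma mulKVr x y : x ** y ** inv y = x. Proof. rewrite <- mulA, mulVr, mul1r; auto. Qed.
Lemma mulVKr x y : x ** inv y ** y = x. Proof. rewrite <- mulA, mulVl, mul1r; auto. Qed.

Lemma word_prod_app (u v : list G) : word_prod (u ++ v) = word_prod u ** word_prod v.
Proof. induction u; simpl. rewrite mul1l; auto. unfold word_prod in *. simpl. rewrite IHu, mulA; auto. Qed.

Variable Sg : list G.
Hypothesis HS : generates Sg.

Lemma exists_len g : exists n, word_len_is Sg g n.
Proof.
  assert (Hex : exists n, exists w, represents Sg w g /\ length w = n).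
  { destruct (HS g) as [w Hw]. eauto. }
  destruct (nat_min _ Hex) as [n [[w [Hw Hl]] Hm]].
  exists n. split; [eauto|]. intros w' Hw'. apply Hm. eauto.
Qed.

Definition norm (g : G) : nat := proj1_sig (constructive_indefinite_description _ (exists_len g)).

Lemma norm_spec g : word_len_is Sg g (norm g).
Proof. unfold norm. destruct constructive_indefinite_description; auto. Qed.

Lemma word_len_uniq g n m : word_len_is Sg g n -> word_len_is Sg g m -> n = m.
Proof.
  intros [[w1 [H1 L1]] M1] [[w2 [H2 L2]] M2].
  specialize (M1 _ H2). specialize (M2 _ H1). lia.
Qed.

Lemma norm_le g w : represents Sg w g -> norm g <= length w.
Proof. intros H. destruct (norm_spec g) as [_ M]. auto. Qed.

Lemma geod g : exists w, represents Sg w g /\ length w = norm g.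
Proof. destruct (norm_spec g) as [E _]. auto. Qed.

Lemma rep_app u v x y : represents Sg u x -> represents Sg v y -> represents Sg (u ++ v) (x ** y).
Proof.
  intros [F1 E1] [F2 E2]. split. apply Forall_app; auto. rewrite word_prod_app; subst; auto.
Qed.

Lemma norm_mul x y : norm (x ** y) <= norm x + norm y.
Proof.
  destruct (geod x) as [u [Hu Lu]], (geod y) as [v [Hv Lv]].
  rewrite <- Lu, <- Lv, <- length_app. apply norm_le, rep_app; auto.
Qed.

Lemma rep_inv w x : represents Sg w x -> represents Sg (rev (map inv w)) (inv x).
Proof.
  intros [F E]. subst x. split.
  - apply Forall_rev. apply Forall_map. eapply Forall_impl; [|exact F].
    intros a [Ha|Ha]; [right; rewrite invK; auto | left; auto].
  - induction w; simpl. symmetry; apply inv1.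
    rewrite word_prod_app. unfold word_prod at 2. simpl. rewrite mul1r.
    inversion F; subst. rewrite IHw by auto. unfold word_prod. simpl. rewrite invM. auto.
Qed.

Lemma norm_inv x : norm (inv x) = norm x.
Proof.
  assert (forall y, norm (inv y) <= norm y).
  { intros y. destruct (geod y) as [w [Hw Lw]]. rewrite <- Lw.
    rewrite <- (length_map inv w), <- length_rev. apply norm_le, rep_inv; auto. }
  specialize (H x) as H1. specialize (H (inv x)). rewrite invK in H. lia.
Qed.

Lemma norm1 : norm 1 = 0.
Proof. assert (norm 1 <= length (@nil G)) by (apply norm_le; split; auto). simpl in H. lia. Qed.

Lemma norm0 x : norm x = 0 -> x = 1.
Proof. intros H. destruct (geod x) as [w [[_ E] Lw]]. rewrite H in Lw. destruct w; try discriminate. auto. Qed.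

Definition d (x y : G) : nat := norm (inv x ** y).

Lemma dist_is_d x y n : dist_is Sg x y n <-> n = d x y.
Proof.
  unfold dist_is, d. split.
  - intros H. eapply word_len_uniq; eauto. apply norm_spec.
  - intros ->. apply norm_spec.
Qed.

Lemma d_sym x y : d x y = d y x.
Proof. unfold d. rewrite <- norm_inv, invM, invK. auto. Qed.
Lemma d_tri x y z : d x z <= d x y + d y z.
Proof. unfold d. replace (inv x ** z) with ((inv x ** y) ** (inv y ** z)). apply norm_mul.
  rewrite <- mulA, mulKr. auto. Qed.
Lemma d_trans g x y : d (g ** x) (g ** y) = d x y.
Proof. unfold d. rewrite invM, <- mulA, mulKl. auto. Qed.
Lemma d_refl x : d x x = 0.
Proof. unfold d. rewrite mulVl. apply norm1. Qed.
Lemma d1 x : d 1 x = norm x.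
Proof. unfold d. rewrite inv1, mul1l. auto. Qed.

Lemma firstn_rep w k : Forall (S_letter Sg) w -> Forall (S_letter Sg) (firstn k w) /\ Forall (S_letter Sg) (skipn k w).
Proof. intros F. rewrite <- (firstn_skipn k w) in F. apply Forall_app in F. auto. Qed.

Lemma prefixes g : exists P : nat -> G, P 0 = 1 /\ P (norm g) = g /\
   forall i k, i <= k <= norm g -> d (P i) (P k) = k - i.
Proof.
  destruct (geod g) as [w [[F E] Lw]].
  exists (fun k => word_prod (firstn k w)). split; [auto|]. split.
  { rewrite <- Lw, firstn_all. auto. }
  assert (Hle : forall i k, i <= k <= norm g -> d (word_prod (firstn i w)) (word_prod (firstn k w)) <= k - i).
  { intros i k Hik. unfold d.
    assert (firstn k w = firstn i w ++ skipn i (firstn k w)).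
    { rewrite <- (firstn_skipn i (firstn k w)) at 1. f_equal. rewrite firstn_firstn. f_equal. lia. }
    rewrite H, word_prod_app, mulKl.
    eapply Nat.le_trans. apply norm_le. split. 2: reflexivity.
    destruct (firstn_rep w k F) as [F1 _]. destruct (firstn_rep _ i F1); auto.
    rewrite length_skipn, firstn_length_le; lia. }
  intros i k Hik. apply Nat.le_antisymm. apply Hle; auto.
  assert (A := Hle 0 i ltac:(lia)). assert (B := Hle k (norm g) ltac:(lia)).
  rewrite <- Lw, firstn_all in B. rewrite Lw, E in B.
  change (word_prod (firstn 0 w)) with (@gone G) in A.
  assert (C := d_tri 1 (word_prod (firstn i w)) g).
  assert (C2 := d_tri (word_prod (firstn i w)) (word_prod (firstn k w)) g).
  rewrite d1 in C. lia.
Qed.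

End Grp.
Lemma lt_pow2 n : n < 2 ^ n.
Proof. induction n; simpl; lia. Qed.

Lemma sq_pow2 k : 4 <= k -> k * k <= 2 ^ k.
Proof.
  induction k; intros H. lia.
  destruct (Nat.eq_dec k 3). subst. simpl. lia.
  specialize (IHk ltac:(lia)). rewrite Nat.pow_succ_r'. nia.
Qed.

Lemma beat A B : exists k, A * k + B < 2 ^ k.
Proof. exists (A + B + 4). assert (H := sq_pow2 (A + B + 4) ltac:(lia)). nia. Qed.

Lemma third n : exists u, n <= 3 * u <= n + 2.
Proof. induction n. exists 0; lia. destruct IHn as [u Hu].
  destruct (Nat.eq_dec (3 * u) n). exists (u + 1); lia. exists u; lia. Qed.

Lemma growth (f : nat -> nat) (m Q c : nat) :
  (forall r r', r <= r' -> f r <= f r') ->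
  (forall k, 2 ^ k <= f ((m + 1) * k)) ->
  exists s, Q * f (2 * s + c) < f (3 * s).
Proof.
  intros Mono Low.
  destruct (classic (exists s, Q * f (2 * s + c) < f (3 * s))) as [E|NE]; auto. exfalso.
  assert (H : forall s, f (3 * s) <= Q * f (2 * s + c)).
  { intros s. destruct (le_lt_dec (f (3 * s)) (Q * f (2 * s + c))); auto. exfalso; eauto. }
  assert (D : forall s, 15 * c + 20 <= s -> f (2 * s) <= Q * Q * f s).
  { intros s Hs. destruct (third (2 * s)) as [u Hu]. destruct (third (2 * u + c)) as [u' Hu'].
    assert (A1 := Mono (2 * s) (3 * u) ltac:(lia)). assert (A2 := H u).
    assert (A3 := Mono (2 * u + c) (3 * u') ltac:(lia)). assert (A4 := H u').
    assert (A5 := Mono (2 * u' + c) s ltac:(lia)).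
    assert (Q * f (2 * u + c) <= Q * (Q * f (2 * u' + c))) by (apply Nat.mul_le_mono_l; lia).
    assert (Q * (Q * f (2 * u' + c)) <= Q * (Q * f s)) by (apply Nat.mul_le_mono_l, Nat.mul_le_mono_l; lia).
    nia. }
  set (s1 := (m + 1) * (15 * c + 20)).
  assert (It : forall k, f (2 ^ k * s1) <= (Q * Q) ^ k * f s1).
  { induction k. rewrite !Nat.pow_0_r, !Nat.mul_1_l. lia.
    rewrite Nat.pow_succ_r'. replace (2 * 2 ^ k * s1) with (2 * (2 ^ k * s1)) by lia.
    assert (P1 : 1 <= 2 ^ k) by (apply Nat.neq_0_lt_0, Nat.pow_nonzero; lia).
    assert (D' := D (2 ^ k * s1) ltac:(unfold s1; nia)).
    rewrite Nat.pow_succ_r'. assert (Q * Q * f (2 ^ k * s1) <= Q * Q * ((Q * Q) ^ k * f s1)) by (apply Nat.mul_le_mono_l; auto).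
    lia. }
  destruct (beat (Q * Q) (f s1)) as [k Hk].
  assert (L1 := Low (2 ^ k * (15 * c + 20))).
  replace ((m + 1) * (2 ^ k * (15 * c + 20))) with (2 ^ k * s1) in L1 by (unfold s1; ring).
  assert (L2 : 2 ^ (2 ^ k) <= 2 ^ (2 ^ k * (15 * c + 20))) by (apply Nat.pow_le_mono_r; nia).
  assert (U1 : (Q * Q) ^ k <= 2 ^ (Q * Q * k)).
  { rewrite Nat.pow_mul_r. apply Nat.pow_le_mono_l. apply Nat.lt_le_incl, lt_pow2. }
  assert (U2 : f s1 <= 2 ^ f s1) by (apply Nat.lt_le_incl, lt_pow2).
  assert (U : 2 ^ (2 ^ k) <= 2 ^ (Q * Q * k + f s1)).
  { rewrite Nat.pow_add_r. specialize (It k). eapply Nat.le_trans. eapply Nat.le_trans. exact L2. exact L1.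
    eapply Nat.le_trans. exact It. apply Nat.mul_le_mono; auto. }
  apply Nat.pow_le_mono_r_iff in U; lia.
Qed.
Section Hyp.
Context {G : Group}.
Local Infix "**" := (@gmul G) (at level 40, left associativity).
Local Notation e := (@gone G).
Local Notation inv := (@ginv G).
Variable Sg : list G.
Hypothesis HS : generates Sg.
Local Notation d := (d Sg HS).
Local Notation norm := (norm Sg HS).
Variable δ : nat.
Hypothesis H4 : forall x y z w, d x y + d z w <= Nat.max (d x z + d y w) (d x w + d y z) + 2 * δ.

Definition gp (w a b : G) : Z := (Z.of_nat (d w a) + Z.of_nat (d w b) - Z.of_nat (d a b))%Z.

Lemma gp4 w a b c : (gp w a b >= Z.min (gp w a c) (gp w c b) - 2 * Z.of_nat δ)%Z.
Proof.
  unfold gp. specialize (H4 a b c w).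
  rewrite (d_sym Sg HS c w), (d_sym Sg HS b w), (d_sym Sg HS a w), (d_sym Sg HS b c) in H4.
  lia.
Qed.

Lemma gp_sym w a b : gp w a b = gp w b a.
Proof. unfold gp. rewrite (d_sym Sg HS a b). lia. Qed.

Lemma gp_nonneg w a b : (0 <= gp w a b)%Z.
Proof. unfold gp. assert (H := d_tri Sg HS a w b). rewrite (d_sym Sg HS a w) in H. lia. Qed.

Lemma gp_le w a b : (gp w a b <= 2 * Z.of_nat (d w b))%Z.
Proof. unfold gp. assert (H := d_tri Sg HS w b a). rewrite (d_sym Sg HS b a) in H. lia. Qed.

Lemma thin w x y u v s :
  d w u = s -> d w u + d u x = d w x ->
  d w v = s -> d w v + d v y = d w y ->
  (2 * Z.of_nat s <= gp w x y)%Z -> d u v <= 4 * δ.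
Proof.
  intros H1 H2 H3 H4' H5.
  assert (A := gp4 w u v x). assert (B := gp4 w x v y).
  unfold gp in *. rewrite (d_sym Sg HS u x) in *. rewrite (d_sym Sg HS v y) in *. lia.
Qed.

Definition Pf (g : G) : nat -> G := proj1_sig (constructive_indefinite_description _ (prefixes Sg HS g)).
Lemma Pf_spec g : Pf g 0 = e /\ Pf g (norm g) = g /\
   forall i k, i <= k <= norm g -> d (Pf g i) (Pf g k) = k - i.
Proof. unfold Pf. destruct constructive_indefinite_description; auto. Qed.

Lemma Pf_d0 g i : i <= norm g -> d e (Pf g i) = i.
Proof. intros H. destruct (Pf_spec g) as [A [B C]]. rewrite <- A. rewrite C; lia. Qed.
Lemma Pf_norm g i : i <= norm g -> norm (Pf g i) = i.
Proof. intros H. rewrite <- d1. apply Pf_d0; auto. Qed.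
Lemma Pf_dn g i : i <= norm g -> d (Pf g i) g = norm g - i.
Proof. intros H. destruct (Pf_spec g) as [A [B C]]. set (P := Pf g) in *. set (n := norm g) in *.
  rewrite <- B. apply C; lia. Qed.
Lemma Pf_dd g i k : i <= k <= norm g -> d (Pf g i) (Pf g k) = k - i.
Proof. intros H. destruct (Pf_spec g) as [A [B C]]. auto. Qed.

Lemma cross x y r : r <= norm x -> r <= norm y -> (2 * Z.of_nat r <= gp e x y)%Z ->
  norm (inv (Pf y r) ** x) <= norm x - r + 4 * δ.
Proof.
  intros Hx Hy Hg.
  destruct (Pf_spec x) as [X0 [Xn Xd]]. destruct (Pf_spec y) as [Y0 [Yn Yd]].
  assert (Hu : d (Pf x r) (Pf y r) <= 4 * δ).
  { apply (thin e x y (Pf x r) (Pf y r) r).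
    - apply Pf_d0; lia.
    - rewrite Pf_d0, Pf_dn, d1 by lia. lia.
    - apply Pf_d0; lia.
    - rewrite Pf_d0, Pf_dn, d1 by lia. lia.
    - auto. }
  change (norm (inv (Pf y r) ** x)) with (d (Pf y r) x).
  assert (T := d_tri Sg HS (Pf y r) (Pf x r) x).
  rewrite (d_sym Sg HS _ (Pf x r)), Pf_dn in T by lia. lia.
Qed.

Lemma half m : exists j, m = 2 * j \/ m = 2 * j + 1.
Proof. induction m. exists 0; lia. destruct IHm as [j [->| ->]]. exists j; lia. exists (j + 1); lia. Qed.

Lemma d_l x y : d x (x ** y) = norm y.
Proof. change (norm (inv x ** (x ** y)) = norm y). rewrite mulKl. auto. Qed.
Lemma d_e x : d x e = norm x.
Proof. change (norm (inv x ** e) = norm x). rewrite mul1r, norm_inv. auto. Qed.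

Lemma elliptic x K : norm (x ** x) <= norm x + K ->
  exists p t, x = p ** t ** inv p /\ 2 * norm p <= norm x /\ norm t <= K + 1 + 4 * δ.
Proof.
  intros Hxx.
  destruct (half (norm x - K)) as [j Hj].
  assert (Huv : d (Pf x (norm x - j)) (x ** Pf x j) <= 4 * δ).
  { apply (thin x e (x ** x) (Pf x (norm x - j)) (x ** Pf x j) j).
    - rewrite (d_sym Sg HS), Pf_dn; lia.
    - rewrite (d_sym Sg HS x), Pf_dn, (d_sym Sg HS _ e), Pf_d0, d_e; lia.
    - rewrite d_l, Pf_norm by lia. auto.
    - rewrite d_l, d_l, d_trans, Pf_dn, Pf_norm by lia. lia.
    - unfold gp. rewrite d_e, d_l, d1. assert (M := norm_mul Sg HS x x). lia. }
  exists (Pf x j), (inv (Pf x j) ** x ** Pf x j). split.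
  - rewrite (mulA (Pf x j)), mulKVr, mulKr. auto.
  - split.
    + rewrite Pf_norm; lia.
    + rewrite <- mulA. change (norm (inv (Pf x j) ** (x ** Pf x j))) with (d (Pf x j) (x ** Pf x j)).
      assert (T := d_tri Sg HS (Pf x j) (Pf x (norm x - j)) (x ** Pf x j)).
      rewrite Pf_dd in T by lia. lia.
Qed.

Lemma chain (x : nat -> G) (A : nat -> Z) :
  (forall k, (gp (x (S k)) (x k) (x (S (S k))) <= A (S k))%Z) ->
  (forall k, 1 <= k -> (2 * Z.of_nat (d (x k) (x (S k))) > A k + A (S k) + 4 * Z.of_nat δ)%Z) ->
  forall k, 1 <= k -> (gp (x k) (x 0%nat) (x (S k)) <= A k + 2 * Z.of_nat δ)%Z.
Proof.
  intros HA Hc k Hk. induction k as [|k IH]; [lia|].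
  destruct k as [|k].
  - specialize (HA 0%nat). lia.
  - specialize (IH ltac:(lia)). specialize (Hc (S k) ltac:(lia)). specialize (HA (S k)).
    assert (F := gp4 (x (S (S k))) (x (S k)) (x (S (S (S k)))) (x 0)).
    assert (I : (gp (x (S (S k))) (x (S k)) (x 0%nat) + gp (x (S k)) (x 0%nat) (x (S (S k))) = 2 * Z.of_nat (d (x (S k)) (x (S (S k)))))%Z).
    { unfold gp. rewrite (d_sym _ _ (x (S (S k))) (x (S k))), (d_sym _ _ (x (S (S k))) (x 0%nat)). lia. }
    lia.
Qed.

Fixpoint lt (a b : G) (k : nat) : G :=
  match k with 0 => a | 1 => b | 2 => inv a | 3 => inv b | S (S (S (S k'))) => lt a b k' end.
Fixpoint xs (a b : G) (k : nat) : G :=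
  match k with 0 => e | S k => xs a b k ** lt a b k end.
Fixpoint gpow (g : G) (m : nat) : G :=
  match m with 0 => e | S m => gpow g m ** g end.
Definition cc (p q : G) : Z := (Z.of_nat (norm p) + Z.of_nat (norm q) - Z.of_nat (norm (p ** q)))%Z.
Definition AA (a b : G) (k : nat) : Z := match k with 0 => 0%Z | S k' => cc (lt a b k') (lt a b k) end.

Lemma lt4 a b k : lt a b (k + 4) = lt a b k.
Proof. replace (k + 4) with (S (S (S (S k)))) by lia. reflexivity. Qed.

Lemma xs_pow a b m : xs a b (4 * m) = gpow (comm a b) m.
Proof.
  induction m. reflexivity.
  replace (4 * S m) with (S (S (S (S (4 * m))))) by lia. cbn [xs gpow]. rewrite IHm.
  assert (L : forall r, lt a b (4 * m + r) = lt a b r).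
  { intros r. clear IHm. induction m as [|m IH]. reflexivity. replace (4 * S m + r) with ((4 * m + r) + 4) by lia.
    rewrite lt4. apply IH. }
  assert (E0 := L 0). assert (E1 := L 1). assert (E2 := L 2). assert (E3 := L 3).
  rewrite Nat.add_0_r in E0. replace (4 * m + 1) with (S (4 * m)) in E1 by lia.
  replace (4 * m + 2) with (S (S (4 * m))) in E2 by lia.
  replace (4 * m + 3) with (S (S (S (4 * m)))) in E3 by lia.
  rewrite E0, E1, E2, E3. cbn [lt]. unfold comm. rewrite !mulA. reflexivity.
Qed.

Lemma cc_le p q : (cc p q <= 2 * Z.of_nat (norm q))%Z /\ (cc p q <= 2 * Z.of_nat (norm p))%Z.
Proof.
  unfold cc. split.
  - assert (H := norm_mul Sg HS (p ** q) (inv q)). rewrite mulKVr, norm_inv in H. lia.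
  - assert (H := norm_mul Sg HS (inv p) (p ** q)). rewrite mulKl, norm_inv in H. lia.
Qed.

Lemma d_r y p : d (y ** p) y = norm p.
Proof. rewrite <- (mul1r y) at 2. rewrite d_trans, d_e. auto. Qed.

Lemma corner a b k : gp (xs a b (S k)) (xs a b k) (xs a b (S (S k))) = AA a b (S k).
Proof.
  simpl. unfold gp, cc. rewrite d_r, d_l, <- mulA, d_l. auto.
Qed.

Lemma dxs a b k : d (xs a b k) (xs a b (S k)) = norm (lt a b k).
Proof. cbn [xs]. apply d_l. Qed.

Lemma periodic (P : nat -> Prop) : (forall r, 1 <= r <= 4 -> P r) -> (forall k, 1 <= k -> P k -> P (k + 4)) ->
  forall k, 1 <= k -> P k.
Proof.
  intros H1 H2 k. induction k as [k IH] using (well_founded_induction lt_wf). intros Hk.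
  destruct (le_lt_dec k 4). apply H1; lia.
  replace k with ((k - 4) + 4) by lia. apply H2. lia. apply IH; lia.
Qed.

Lemma AA4 a b k : 1 <= k -> AA a b (k + 4) = AA a b k.
Proof.
  intros Hk. destruct k as [|k]. lia. replace (S k + 4) with (S (k + 4)) by lia. cbn [AA].
  rewrite lt4. replace (S (k + 4)) with (S k + 4) by lia. rewrite lt4. auto.
Qed.

Lemma comm_disp a b :
  (2 * Z.of_nat (norm b) > cc a b + cc b (inv a) + 4 * Z.of_nat δ)%Z ->
  (2 * Z.of_nat (norm b) > cc (inv a) (inv b) + cc (inv b) a + 4 * Z.of_nat δ)%Z ->
  (Z.of_nat (norm a) > 2 * Z.of_nat (norm b) + 2 * Z.of_nat δ)%Z ->
  forall y, (Z.of_nat (d y (comm a b ** y)) >= 2 * Z.of_nat (norm a) - 6 * Z.of_nat (norm b) - 8 * Z.of_nat δ)%Z.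
Proof.
  intros C1 C3 Ca.
  assert (Hb := norm_inv Sg HS b). assert (Ha := norm_inv Sg HS a).
  assert (HC : forall k, 1 <= k -> (2 * Z.of_nat (d (xs a b k) (xs a b (S k))) > AA a b k + AA a b (S k) + 4 * Z.of_nat δ)%Z).
  { apply periodic.
    - intros r Hr. rewrite dxs.
      destruct r as [|[|[|[|[|r]]]]]; try lia; simpl AA; simpl lt.
      + lia.
      + destruct (cc_le b (inv a)), (cc_le (inv a) (inv b)). lia.
      + lia.
      + destruct (cc_le (inv b) a), (cc_le a b). lia.
    - intros k Hk IH. replace (S (k + 4)) with (S k + 4) by lia. rewrite !AA4 by lia.
      rewrite dxs in IH |- *. rewrite lt4. auto. }
  assert (HE := chain (xs a b) (AA a b) (fun k => Z.eq_le_incl _ _ (corner a b k)) HC).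
  assert (Lb : forall k, (AA a b k <= 2 * Z.of_nat (norm b))%Z).
  { intros k. destruct k as [|k]. cbn [AA]. lia.
    assert (forall k, norm (lt a b k) = norm a \/ norm (lt a b k) = norm b).
    { intros j. induction j as [j IH] using (well_founded_induction lt_wf).
      destruct j as [|[|[|[|j]]]]; simpl; auto. apply IH. lia. }
    assert (forall j, lt a b j = b \/ lt a b j = inv b \/ lt a b (S j) = b \/ lt a b (S j) = inv b).
    { intros j. induction j as [j IH] using (well_founded_induction lt_wf).
      destruct j as [|[|[|[|j]]]]; simpl; auto. apply IH. lia. }
    cbn [AA]. destruct (cc_le (lt a b k) (lt a b (S k))) as [X Y].
    set (c := cc (lt a b k) (lt a b (S k))) in *.
    destruct (H0 k) as [E|[E|[E|E]]]; try rewrite E in X; try rewrite E in Y; try rewrite Hb in X; try rewrite Hb in Y; lia. }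
  assert (Step : forall k, (Z.of_nat (d e (xs a b (S k))) >= Z.of_nat (d e (xs a b k)) + Z.of_nat (norm (lt a b k)) - 2 * Z.of_nat (norm b) - 2 * Z.of_nat δ)%Z).
  { intros k. destruct k as [|k].
    - cbn [xs lt]. rewrite mul1l, d1, d_refl. lia.
    - specialize (HE (S k) ltac:(lia)). specialize (Lb (S k)). unfold gp in HE.
      cbn [xs] in HE |- *. rewrite d_l in HE. rewrite (d_sym Sg HS (xs a b k ** lt a b k) e) in HE. lia. }
  assert (Grow : forall m, (Z.of_nat (norm (gpow (comm a b) m)) >= Z.of_nat m * (2 * Z.of_nat (norm a) - 6 * Z.of_nat (norm b) - 8 * Z.of_nat δ))%Z).
  { intros m. rewrite <- xs_pow, <- d1. induction m. simpl. rewrite d_refl. lia.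
    replace (4 * S m) with (S (S (S (S (4 * m))))) by lia.
    assert (S0 := Step (4 * m)). assert (S1 := Step (S (4 * m))). assert (S2 := Step (S (S (4 * m)))).
    assert (S3 := Step (S (S (S (4 * m))))).
    assert (L : forall r, lt a b (4 * m + r) = lt a b r).
    { intros r. clear IHm S0 S1 S2 S3. induction m. reflexivity. replace (4 * S m + r) with ((4 * m + r) + 4) by lia.
      rewrite lt4. apply IHm. }
    assert (E0 := L 0). assert (E1 := L 1). assert (E2 := L 2). assert (E3 := L 3).
    rewrite Nat.add_0_r in E0. replace (4 * m + 1) with (S (4 * m)) in E1 by lia.
    replace (4 * m + 2) with (S (S (4 * m))) in E2 by lia.
    replace (4 * m + 3) with (S (S (S (4 * m)))) in E3 by lia.
    rewrite E0 in S0. rewrite E1 in S1. rewrite E2 in S2. rewrite E3 in S3. simpl lt in *.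
    rewrite Ha, Hb in *. lia. }
  intros y.
  assert (Pw : forall m, d y (gpow (comm a b) m ** y) <= m * d y (comm a b ** y)).
  { induction m. cbn [gpow]. rewrite mul1l, d_refl. lia.
    cbn [gpow]. rewrite <- mulA.
    assert (T := d_tri Sg HS y (gpow (comm a b) m ** y) (gpow (comm a b) m ** (comm a b ** y))).
    rewrite d_trans in T. lia. }
  set (m := 2 * norm y + 1).
  specialize (Pw m). specialize (Grow m).
  assert (T1 := d_tri Sg HS e y (gpow (comm a b) m)).
  assert (T2 := d_tri Sg HS y (gpow (comm a b) m ** y) (gpow (comm a b) m)).
  assert (T3 : d (gpow (comm a b) m ** y) (gpow (comm a b) m) = norm y).
  { rewrite <- (mul1r (gpow (comm a b) m)) at 2. rewrite d_trans, d_e. auto. }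
  rewrite d1, d1 in T1.
  assert (Hm : (Z.of_nat m * Z.of_nat (d y (comm a b ** y)) >= Z.of_nat m * (2 * Z.of_nat (norm a) - 6 * Z.of_nat (norm b) - 8 * Z.of_nat δ) - 2 * Z.of_nat (norm y))%Z) by lia.
  subst m. nia.
Qed.
Definition bad (y h : G) : Prop :=
  (gp e y h >= Z.of_nat (norm (h ** h)) - 6 * Z.of_nat δ)%Z \/
  (gp e y (inv h) >= Z.of_nat (norm (h ** h)) - 6 * Z.of_nat δ)%Z.

Lemma cc_gp p q : cc p q = gp e (inv p) q.
Proof. unfold cc, gp. rewrite !d1, norm_inv. change (d (inv p) q) with (norm (inv (inv p) ** q)). rewrite invK. auto. Qed.

Lemma gp_hh h : gp e h (inv h) = (2 * Z.of_nat (norm h) - Z.of_nat (norm (h ** h)))%Z.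
Proof. unfold gp. rewrite !d1, norm_inv. change (d h (inv h)) with (norm (inv h ** inv h)).
  rewrite <- invM, norm_inv. lia. Qed.

Lemma good_disp g h : ~ bad g h -> ~ bad (inv g) h ->
  (Z.of_nat (norm g) > 2 * Z.of_nat (norm h) + 2 * Z.of_nat δ)%Z ->
  forall y, (Z.of_nat (d y (comm g h ** y)) >= 2 * Z.of_nat (norm g) - 6 * Z.of_nat (norm h) - 8 * Z.of_nat δ)%Z.
Proof.
  intros B1 B2 Hg. unfold bad in *. apply comm_disp; auto.
  - rewrite !cc_gp. rewrite (gp_sym e (inv h)).
    assert (F := gp4 e h (inv h) (inv g)). rewrite gp_hh in F. rewrite (gp_sym e h (inv g)) in F. lia.
  - rewrite !cc_gp, !invK. rewrite (gp_sym e h g).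
    assert (F := gp4 e h (inv h) g). rewrite gp_hh in F. rewrite (gp_sym e h g) in F. lia.
Qed.

Lemma bad_excl y h1 h2 :
  (forall a b, (a = h1 \/ a = inv h1) -> (b = h2 \/ b = inv h2) ->
     (gp e a b + 8 * Z.of_nat δ < Z.min (Z.of_nat (norm (h1 ** h1))) (Z.of_nat (norm (h2 ** h2))))%Z) ->
  bad y h1 -> bad y h2 -> False.
Proof.
  intros Hs B1 B2.
  assert (K : forall a b, (a = h1 \/ a = inv h1) -> (b = h2 \/ b = inv h2) ->
     (gp e y a >= Z.of_nat (norm (h1 ** h1)) - 6 * Z.of_nat δ)%Z ->
     (gp e y b >= Z.of_nat (norm (h2 ** h2)) - 6 * Z.of_nat δ)%Z -> False).
  { intros a b Ha Hb X Y. specialize (Hs a b Ha Hb). assert (F := gp4 e a b y).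
    rewrite (gp_sym e a y) in F. lia. }
  destruct B1 as [X|X], B2 as [Y|Y].
  - exact (K h1 h2 (or_introl eq_refl) (or_introl eq_refl) X Y).
  - exact (K h1 (inv h2) (or_introl eq_refl) (or_intror eq_refl) X Y).
  - exact (K (inv h1) h2 (or_intror eq_refl) (or_introl eq_refl) X Y).
  - exact (K (inv h1) (inv h2) (or_intror eq_refl) (or_intror eq_refl) X Y).
Qed.
End Hyp.
Section Balls.
Context {G : Group}.
Local Infix "**" := (@gmul G) (at level 40, left associativity).
Local Notation e := (@gone G).
Local Notation inv := (@ginv G).
Variable Sg : list G.
Hypothesis HS : generates Sg.
Local Notation d := (d Sg HS).
Local Notation norm := (norm Sg HS).

Definition eqdec (x y : G) : {x = y} + {x <> y} := excluded_middle_informative (x = y).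
Definition letters := Sg ++ map inv Sg.
Fixpoint wordsk (k : nat) : list (list G) :=
  match k with 0 => [[]] | S k => flat_map (fun w => map (fun l => l :: w) letters) (wordsk k) end.

Lemma wordsk_spec k w : In w (wordsk k) <-> length w = k /\ Forall (fun l => In l letters) w.
Proof.
  revert w; induction k; intros w; simpl.
  - split. intros [<-|[]]; auto. intros [H _]. destruct w; try discriminate; auto.
  - rewrite in_flat_map. split.
    + intros [w' [Hw' Hin]]. apply in_map_iff in Hin. destruct Hin as [l [<- Hl]].
      apply IHk in Hw'. destruct Hw'. simpl. split; auto.
    + intros [Hl HF]. destruct w as [|l w]; try discriminate. inversion HF; subst.
      exists w. split. apply IHk. split; auto. apply in_map_iff. eauto.
Qed.

Definition allw r := flat_map wordsk (seq 0 (S r)).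
Definition ball r := nodup eqdec (map (@word_prod G) (allw r)).

Lemma ball_spec x r : In x (ball r) <-> norm x <= r.
Proof.
  unfold ball. rewrite nodup_In, in_map_iff. split.
  - intros [w [<- Hw]]. unfold allw in Hw. apply in_flat_map in Hw. destruct Hw as [k [Hk Hw]].
    apply in_seq in Hk. apply wordsk_spec in Hw. destruct Hw as [Hl HF].
    assert (norm (word_prod w) <= length w).
    { apply norm_le. split; auto. eapply Forall_impl; [|exact HF]. intros l Hl'.
      unfold letters in Hl'. apply in_app_or in Hl'. destruct Hl' as [H|H]. left; auto.
      right. apply in_map_iff in H. destruct H as [l' [<- H]]. rewrite invK. auto. }
    lia.
  - intros Hx. destruct (geod Sg HS x) as [w [[HF E] Hl]]. exists w. split; auto.
    unfold allw. apply in_flat_map. exists (length w). split. apply in_seq. lia.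
    apply wordsk_spec. split; auto. eapply Forall_impl; [|exact HF].
    intros l [H|H]; unfold letters; apply in_or_app. left; auto. right. apply in_map_iff.
    exists (inv l). rewrite invK. auto.
Qed.

Definition fb r := length (ball r).
Lemma fb_mono r r' : r <= r' -> fb r <= fb r'.
Proof. intros H. apply NoDup_incl_length. apply NoDup_nodup. intros x Hx. apply ball_spec in Hx. apply ball_spec. lia. Qed.

Lemma avoid (L M : list G) : NoDup L -> length M < length L -> exists x, In x L /\ ~ In x M.
Proof.
  intros HL HM. destruct (classic (exists x, In x L /\ ~ In x M)) as [E|NE]; auto. exfalso.
  assert (incl L M). { intros x Hx. destruct (classic (In x M)); auto. exfalso; eauto. }
  apply NoDup_incl_length in H; auto; lia.
Qed.

Variables a b0 : G.
Hypothesis Hf : free_pair a b0.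
Definition gen (c : bool) : G := if c then a else b0.
Definition pw (w : list bool) : G := word_prod (map gen w).

Lemma fr_cons (x y : bool * bool) t : freely_reduced (x :: y :: t) <-> ~ (fst x = fst y /\ snd x <> snd y) /\ freely_reduced (y :: t).
Proof. reflexivity. Qed.

Lemma fr_pos x p : snd x = true -> freely_reduced (x :: map (fun c => (c, true)) p).
Proof.
  revert x. induction p; intros x Hx. simpl. auto.
  cbn [map]. apply fr_cons. split. cbn [fst snd]. rewrite Hx. intros [_ H]. auto. apply IHp. auto.
Qed.

Lemma fr_neg n z Z : freely_reduced (z :: Z) -> snd z = false ->
  freely_reduced (map (fun c => (c, false)) n ++ z :: Z).
Proof.
  intros Hz Hs. induction n. auto.
  cbn [map app]. destruct n as [|c n].
  - cbn [map app]. apply fr_cons. split; auto. cbn [fst snd]. rewrite Hs. intros [_ H]; auto.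
  - cbn [map app] in *. apply fr_cons. split. cbn [fst snd]. intros [_ H]; auto. apply IHn.
Qed.

Lemma wp_neg r : word_prod (map (letter_val a b0) (map (fun c => (c, false)) (rev r))) = inv (pw r).
Proof.
  induction r. simpl. symmetry. apply inv1.
  simpl rev. rewrite !map_app, word_prod_app, IHr. unfold pw. cbn [map word_prod fold_right letter_val fst snd].
  rewrite mul1r, invM. unfold gen. destruct a0; auto.
Qed.

Lemma wp_pos r : word_prod (map (letter_val a b0) (map (fun c => (c, true)) r)) = pw r.
Proof. induction r. auto. unfold pw in *. simpl. unfold word_prod in *. simpl. rewrite IHr. destruct a0; auto. Qed.

Lemma pw_diff r1 r2 : a ** pw r1 = b0 ** pw r2 -> False.
Proof.
  intros H.
  set (l := map (fun c => (c, false)) (rev r2) ++ (false, false) :: (true, true) :: map (fun c => (c, true)) r1).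
  apply (Hf l).
  - unfold l. destruct (rev r2); simpl; discriminate.
  - unfold l. apply fr_neg; auto. apply fr_cons. split. simpl. intros [X _]; discriminate.
    apply fr_pos. auto.
  - unfold l. rewrite map_app, word_prod_app, wp_neg. cbn [map].
    change (word_prod (letter_val a b0 (false, false) :: letter_val a b0 (true, true) :: map (letter_val a b0) (map (fun c => (c, true)) r1)))
      with (inv b0 ** (a ** word_prod (map (letter_val a b0) (map (fun c => (c, true)) r1)))).
    rewrite wp_pos. rewrite mulA, H, <- invM, mulVl. auto.
Qed.

Lemma pw_inj w1 w2 : length w1 = length w2 -> pw w1 = pw w2 -> w1 = w2.
Proof.
  revert w2. induction w1 as [|c1 r1 IH]; intros w2 Hl Hp; destruct w2 as [|c2 r2]; try discriminate; auto.
  change (gen c1 ** pw r1 = gen c2 ** pw r2) in Hp.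
  destruct c1, c2; unfold gen in Hp.
  - f_equal. apply IH. simpl in Hl; lia. eapply mulIl; eauto.
  - exfalso. eapply pw_diff; eauto.
  - exfalso. eapply pw_diff; eauto.
  - f_equal. apply IH. simpl in Hl; lia. eapply mulIl; eauto.
Qed.

Fixpoint blists (k : nat) : list (list bool) :=
  match k with 0 => [[]] | S k => map (cons true) (blists k) ++ map (cons false) (blists k) end.

Lemma blists_spec k : length (blists k) = 2 ^ k /\ NoDup (blists k) /\ forall w, In w (blists k) -> length w = k.
Proof.
  induction k as [|k [L [N I]]]. simpl. split; auto. split. constructor. auto. constructor. intros w [<-|[]]; auto.
  simpl. split. rewrite length_app, !length_map. lia. split.
  - apply NoDup_app. apply (NoDup_map_NoDup_ForallPairs). intros x y _ _ H. injection H; auto. auto.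
    apply (NoDup_map_NoDup_ForallPairs). intros x y _ _ H. injection H; auto. auto.
    intros w H1 H2. apply in_map_iff in H1, H2. destruct H1 as [? [<- _]]. destruct H2 as [? [E _]]. discriminate.
  - intros w H. apply in_app_or in H. destruct H as [H|H]; apply in_map_iff in H; destruct H as [x [<- H]]; simpl; auto.
Qed.

Lemma pw_norm w : norm (pw w) <= (Nat.max (norm a) (norm b0) + 1) * length w.
Proof.
  induction w. unfold pw. simpl. change (word_prod (@nil G)) with (@gone G). rewrite norm1; lia.
  change (pw (a0 :: w)) with (gen a0 ** pw w).
  assert (H := norm_mul Sg HS (gen a0) (pw w)). simpl length.
  assert (norm (gen a0) <= Nat.max (norm a) (norm b0)) by (destruct a0; simpl; lia). nia.
Qed.

Lemma fb_low k : 2 ^ k <= fb ((Nat.max (norm a) (norm b0) + 1) * k).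
Proof.
  destruct (blists_spec k) as [L [N I]]. rewrite <- L. rewrite <- (length_map pw).
  apply NoDup_incl_length.
  - apply NoDup_map_NoDup_ForallPairs; auto. intros x y Hx Hy. apply pw_inj. rewrite (I x Hx), (I y Hy). auto.
  - intros x Hx. apply in_map_iff in Hx. destruct Hx as [w [<- Hw]]. apply ball_spec.
    rewrite <- (I w Hw). apply pw_norm.
Qed.

End Balls.
Lemma flat_map_len {A B} (g : A -> list B) l k : (forall y, length (g y) = k) -> length (flat_map g l) = length l * k.
Proof. intros H. induction l. auto. simpl. rewrite length_app, H, IHl. lia. Qed.

Section Main.
Context {G : Group}.
Local Infix "**" := (@gmul G) (at level 40, left associativity).
Local Notation e := (@gone G).
Local Notation inv := (@ginv G).
Variable Sg : list G.
Hypothesis HS : generates Sg.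
Variable δ : nat.
Hypothesis H4 : forall x y z w, d Sg HS x y + d Sg HS z w <= Nat.max (d Sg HS x z + d Sg HS y w) (d Sg HS x w + d Sg HS y z) + 2 * δ.
Local Notation norm := (norm Sg HS).
Local Notation gp := (gp Sg HS).
Local Notation fb := (fb Sg).
Local Notation ball := (ball Sg).

Definition MM := fb (12 * δ + 1).

Lemma pick s ys : (forall y, In y ys -> 2 * s + 4 * δ < norm y) ->
  (1 + MM + 2 * length ys) * fb (2 * s + 4 * δ) < fb (3 * s) ->
  exists x, 2 * s + 4 * δ < norm x /\ norm x <= 3 * s /\ norm x + 8 * δ < norm (x ** x) /\
    forall y, In y ys -> (gp e x y <= 2 * Z.of_nat s)%Z /\ (gp e (inv x) y <= 2 * Z.of_nat s)%Z.
Proof.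
  intros Hys Hc.
  set (bads := ball (2 * s + 4 * δ) ++
     map (fun pt => fst pt ** snd pt ** inv (fst pt)) (list_prod (ball (2 * s)) (ball (12 * δ + 1))) ++
     flat_map (fun y => map (fun z => Pf Sg HS y s ** z) (ball (2 * s + 4 * δ)) ++
                        map (fun z => inv z ** inv (Pf Sg HS y s)) (ball (2 * s + 4 * δ))) ys).
  assert (Lb : length bads < length (ball (3 * s))).
  { unfold bads. rewrite !length_app, length_map, length_prod.
    rewrite (flat_map_len _ _ (2 * fb (2 * s + 4 * δ))).
    2: { intros y. rewrite length_app, !length_map. fold (fb (2 * s + 4 * δ)). lia. }
    fold (fb (2 * s + 4 * δ)). fold (fb (2 * s)). fold (fb (12 * δ + 1)). fold MM. fold (fb (3 * s)).
    assert (fb (2 * s) <= fb (2 * s + 4 * δ)) by (apply fb_mono; [exact HS | lia]). nia. }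
  destruct (avoid _ _ (NoDup_nodup _ _) Lb) as [x [Hx Hnx]].
  apply (ball_spec Sg HS) in Hx.
  assert (Short : 2 * s + 4 * δ < norm x).
  { destruct (le_lt_dec (norm x) (2 * s + 4 * δ)); auto. exfalso. apply Hnx. unfold bads.
    apply in_or_app. left. apply (proj2 (ball_spec Sg HS _ _)); auto. }
  exists x. split; auto. split; auto. split.
  - destruct (le_lt_dec (norm (x ** x)) (norm x + 8 * δ)) as [E|E]; auto. exfalso.
    destruct (elliptic Sg HS δ H4 x (8 * δ) E) as [p [t [Ex [Hp Ht]]]].
    apply Hnx. unfold bads. apply in_or_app. right. apply in_or_app. left.
    apply in_map_iff. exists (p, t). split. simpl. auto.
    apply in_prod; apply (proj2 (ball_spec Sg HS _ _)); lia.
  - intros y Hy. assert (Ny := Hys y Hy).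
    split.
    + destruct (Z_le_gt_dec (gp e x y) (2 * Z.of_nat s)) as [E|E]; auto. exfalso.
      assert (C := cross Sg HS δ H4 x y s ltac:(lia) ltac:(lia) ltac:(lia)).
      apply Hnx. unfold bads. apply in_or_app. right. apply in_or_app. right.
      apply in_flat_map. exists y. split; auto. apply in_or_app. left. apply in_map_iff.
      exists (inv (Pf Sg HS y s) ** x). split. apply mulKr. apply (proj2 (ball_spec Sg HS _ _)). lia.
    + destruct (Z_le_gt_dec (gp e (inv x) y) (2 * Z.of_nat s)) as [E|E]; auto. exfalso.
      assert (Ni := norm_inv Sg HS x).
      assert (C := cross Sg HS δ H4 (inv x) y s ltac:(lia) ltac:(lia) ltac:(lia)).
      apply Hnx. unfold bads. apply in_or_app. right. apply in_or_app. right.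
      apply in_flat_map. exists y. split; auto. apply in_or_app. right. apply in_map_iff.
      exists (inv (Pf Sg HS y s) ** inv x). split.
      * rewrite invM, !invK, mulKVr. auto.
      * apply (proj2 (ball_spec Sg HS _ _)). lia.
Qed.

Lemma unbounded (gamma : nat -> G) : (forall m n, gamma m = gamma n -> m = n) ->
  forall R, exists n, R < norm (gamma n).
Proof.
  intros Inj R. destruct (classic (exists n, R < norm (gamma n))) as [E|NE]; auto. exfalso.
  assert (Hle : forall n, norm (gamma n) <= R).
  { intros n. destruct (le_lt_dec (norm (gamma n)) R); auto. exfalso; eauto. }
  assert (L : length (map gamma (seq 0 (S (fb R)))) <= fb R).
  { apply NoDup_incl_length.
    - apply NoDup_map_NoDup_ForallPairs. intros x y _ _ H. apply Inj; auto. apply seq_NoDup.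
    - intros x Hx. apply in_map_iff in Hx. destruct Hx as [n [<- _]]. apply (proj2 (ball_spec Sg HS _ _)). auto. }
  rewrite length_map, length_seq in L. lia.
Qed.

End Main.
Section Main2.
Context {G : Group}.
Local Infix "**" := (@gmul G) (at level 40, left associativity).
Local Notation e := (@gone G).
Local Notation inv := (@ginv G).
Variable Sg : list G.
Hypothesis HS : generates Sg.
Variable δ : nat.
Hypothesis H4 : forall x y z w, d Sg HS x y + d Sg HS z w <= Nat.max (d Sg HS x z + d Sg HS y w) (d Sg HS x w + d Sg HS y z) + 2 * δ.
Local Notation norm := (norm Sg HS).
Local Notation gp := (gp Sg HS).
Local Notation fb := (fb Sg).
Local Notation bad := (bad Sg HS δ).

Lemma sep_of s hi hj :
  2 * s + 4 * δ < norm hi -> norm hi + 8 * δ < norm (hi ** hi) ->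
  2 * s + 4 * δ < norm hj -> norm hj + 8 * δ < norm (hj ** hj) ->
  (forall y, In y [hi; inv hi] -> (gp e hj y <= 2 * Z.of_nat s)%Z /\ (gp e (inv hj) y <= 2 * Z.of_nat s)%Z) ->
  (forall a b, (a = hi \/ a = inv hi) -> (b = hj \/ b = inv hj) ->
     (gp e a b + 8 * Z.of_nat δ < Z.min (Z.of_nat (norm (hi ** hi))) (Z.of_nat (norm (hj ** hj))))%Z).
Proof.
  intros A1 A2 A3 A4 H a b Ha Hb.
  assert (gp e a b <= 2 * Z.of_nat s)%Z.
  { rewrite (gp_sym Sg HS). destruct Ha as [-> | ->], Hb as [-> | ->].
    - exact (proj1 (H hi (or_introl eq_refl))).
    - exact (proj2 (H hi (or_introl eq_refl))).
    - exact (proj1 (H (inv hi) (or_intror (or_introl eq_refl)))).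
    - exact (proj2 (H (inv hi) (or_intror (or_introl eq_refl)))). }
  lia.
Qed.

Lemma main_sec (gamma : nat -> G) (a b0 : G) : free_pair a b0 -> (forall m n, gamma m = gamma n -> m = n) ->
  exists h, forall B, exists n, ~ transl_len_le Sg (comm (gamma n) h) B.
Proof.
  intros Hf Inj.
  destruct (growth fb (Nat.max (norm a) (norm b0)) (9 + MM Sg δ) (4 * δ) (fb_mono Sg HS) (fb_low Sg HS a b0 Hf)) as [s Hs].
  assert (Hq : forall k, k <= 8 -> (1 + MM Sg δ + k) * fb (2 * s + 4 * δ) < fb (3 * s)).
  { intros k Hk. eapply Nat.le_lt_trans; [|exact Hs]. apply Nat.mul_le_mono_r. lia. }
  destruct (pick Sg HS δ H4 s [] ltac:(simpl; tauto) (Hq 0 ltac:(lia))) as [h1 [A1 [B1 [C1 _]]]].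
  assert (Ni1 := norm_inv Sg HS h1).
  destruct (pick Sg HS δ H4 s [h1; inv h1]) as [h2 [A2 [B2 [C2 D2]]]].
  { intros y [<-|[<-|[]]]; lia. }
  { apply (Hq 4). lia. }
  assert (Ni2 := norm_inv Sg HS h2).
  destruct (pick Sg HS δ H4 s [h1; inv h1; h2; inv h2]) as [h3 [A3 [B3 [C3 D3]]]].
  { intros y [<-|[<-|[<-|[<-|[]]]]]; lia. }
  { apply (Hq 8). lia. }
  assert (S12 := sep_of s h1 h2 A1 C1 A2 C2 D2).
  assert (S13 := sep_of s h1 h3 A1 C1 A3 C3 (fun y Hy => D3 y (in_or_app [h1; inv h1] [h2; inv h2] y (or_introl Hy)))).
  assert (S23 := sep_of s h2 h3 A2 C2 A3 C3 (fun y Hy => D3 y (in_or_app [h1; inv h1] [h2; inv h2] y (or_intror Hy)))).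
  assert (E12 := fun y => bad_excl Sg HS δ H4 y h1 h2 S12).
  assert (E13 := fun y => bad_excl Sg HS δ H4 y h1 h3 S13).
  assert (E23 := fun y => bad_excl Sg HS δ H4 y h2 h3 S23).
  destruct (classic (forall B, exists n, ~ transl_len_le Sg (comm (gamma n) h1) B)) as [G1|G1]; [eauto|].
  destruct (classic (forall B, exists n, ~ transl_len_le Sg (comm (gamma n) h2) B)) as [G2|G2]; [eauto|].
  destruct (classic (forall B, exists n, ~ transl_len_le Sg (comm (gamma n) h3) B)) as [G3|G3]; [eauto|].
  exfalso.
  apply not_all_ex_not in G1. destruct G1 as [K1 G1].
  apply not_all_ex_not in G2. destruct G2 as [K2 G2].
  apply not_all_ex_not in G3. destruct G3 as [K3 G3].
  assert (T1 : forall n, transl_len_le Sg (comm (gamma n) h1) K1) by (intros n; apply NNPP; intros X; apply G1; eauto).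
  assert (T2 : forall n, transl_len_le Sg (comm (gamma n) h2) K2) by (intros n; apply NNPP; intros X; apply G2; eauto).
  assert (T3 : forall n, transl_len_le Sg (comm (gamma n) h3) K3) by (intros n; apply NNPP; intros X; apply G3; eauto).
  destruct (unbounded Sg HS gamma Inj (K1 + K2 + K3 + 3 * (norm h1 + norm h2 + norm h3) + 4 * δ + 1)) as [n Hn].
  assert (Fin : forall h K, transl_len_le Sg (comm (gamma n) h) K -> ~ bad (gamma n) h -> ~ bad (inv (gamma n)) h ->
     (Z.of_nat (norm (gamma n)) > 2 * Z.of_nat (norm h) + 2 * Z.of_nat δ)%Z ->
     (Z.of_nat K < 2 * Z.of_nat (norm (gamma n)) - 6 * Z.of_nat (norm h) - 8 * Z.of_nat δ)%Z -> False).
  { intros h K [y [k [Hd Hk]]] X Y Z W. apply (dist_is_d Sg HS) in Hd. subst k.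
    assert (D := good_disp Sg HS δ H4 (gamma n) h X Y Z y). lia. }
  destruct (classic (bad (gamma n) h1 \/ bad (inv (gamma n)) h1)) as [P1|P1].
  2: { apply (Fin h1 K1 (T1 n)); try tauto; lia. }
  destruct (classic (bad (gamma n) h2 \/ bad (inv (gamma n)) h2)) as [P2|P2].
  2: { apply (Fin h2 K2 (T2 n)); try tauto; lia. }
  destruct (classic (bad (gamma n) h3 \/ bad (inv (gamma n)) h3)) as [P3|P3].
  2: { apply (Fin h3 K3 (T3 n)); try tauto; lia. }
  specialize (E12 (gamma n)) as X12. specialize (E13 (gamma n)) as X13. specialize (E23 (gamma n)) as X23.
  specialize (E12 (inv (gamma n))). specialize (E13 (inv (gamma n))). specialize (E23 (inv (gamma n))).
  tauto.
Qed.

End Main2.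

Theorem mainTheorem17 (G : Group) (S : list G) (gamma : nat -> G) :
  generates S -> hyperbolic S -> non_elementary G ->
  (forall m n, gamma m = gamma n -> m = n) ->
  exists h : G, forall B : nat, exists n : nat,
    ~ transl_len_le S (comm (gamma n) h) B.
Proof.
  intros HS [δ Hh] [a [b0 Hf]] Inj.
  apply (main_sec S HS δ) with (a := a) (b0 := b0); auto.
  intros x y z w. apply (Hh x y z w); apply (proj2 (dist_is_d S HS _ _ _)); reflexivity.
Qed.
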